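(* Let $\mu_1,\mu_2$, $P_{n,m}$, the nearest neighbor recurrence coefficients $a_{n,m},b_{n,m},c_{n,m},d_{n,m}$, the shifted step-line recurrence coefficients and the numbers $c_n^{(j,0)}$, $c_n^{(0,k)}$ be as in the context. Then for $n\ge 0$ and $j\ge 1$: \begin{align*} c_{n+j,n} &= \beta_{2n+j}^{(j,0)}, & d_{n+j,n} &= c_{n+j,n}+c_n^{(j,0)},\\ a_{n+j,n} &= -\frac{\delta_{2n+j+1}^{(j-1,0)}}{c_n^{(j,0)}}, & b_{n+j,n} &= \gamma_{2n+j}^{(j,0)} - a_{n+j,n}, \end{align*} and for $n\ge 1$ and $k\ge 0$: \begin{align*} c_{n,n+k} &= \beta_{2n+k}^{(0,k)}, & d_{n,n+k} &= c_{n,n+k}+c_n^{(0,k)},\\ a_{n,n+k} &= -\frac{\delta_{2n+k}^{(0,k)}}{c_{n-1}^{(0,k)}}, & b_{n,n+k} &= \gamma_{2n+k}^{(0,k)} - a_{n,n+k}. \end{align*} The initial coefficients are $a_{0,0}=b_{0,0}=0$, $c_{0,0}=\beta_0$, and $d_{0,0}$ is a free parameter (not expressed through the step-line coefficients).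
   Context: Let $\mu_1,\mu_2$ be positive Borel measures on $\mathbb{R}$ with all moments finite, forming a normal system: for every $(n,m)\in\mathbb{N}^2$ there is a unique monic polynomial $P_{n,m}$ of degree $n+m$ with $\int x^k P_{n,m}\,d\mu_1=0$ for $0\le k\le n-1$ and $\int x^k P_{n,m}\,d\mu_2=0$ for $0\le k\le m-1$. Set $P_{n,m}=0$ if $n<0$ or $m<0$. Nearest neighbor recurrence relations: for $n,m\ge0$, \[ xP_{n,m}=P_{n+1,m}+c_{n,m}P_{n,m}+a_{n,m}P_{n-1,m}+b_{n,m}P_{n,m-1},\qquad xP_{n,m}=P_{n,m+1}+d_{n,m}P_{n,m}+a_{n,m}P_{n-1,m}+b_{n,m}P_{n,m-1}, \] defining the real numbers $a_{n,m},b_{n,m},c_{n,m},d_{n,m}$ (coefficients multiplying a zero polynomial, i.e. $a_{0,m}$ and $b_{n,0}$, are not determined by these relations). One has $P_{n+1,m}-P_{n,m+1}=(d_{n,m}-c_{n,m})P_{n,m}$. Step-line: $p_{2n}=P_{n,n}$, $p_{2n+1}=P_{n+1,n}$, with $xp_n=p_{n+1}+\beta_np_n+\gamma_np_{n-1}+\delta_np_{n-2}$, $p_{-1}=p_{-2}=0$. Shift $(j,0)$, $j\ge0$: $p_{2n+j}^{(j,0)}=P_{n+j,n}$, $p_{2n+j+1}^{(j,0)}=P_{n+j+1,n}$ ($n\ge0$), $p^{(j,0)}_{j-1}=p^{(j,0)}_{j-2}=0$, and for $n\ge j$: $xp_n^{(j,0)}=p_{n+1}^{(j,0)}+\beta_n^{(j,0)}p_n^{(j,0)}+\gamma_n^{(j,0)}p_{n-1}^{(j,0)}+\delta_n^{(j,0)}p_{n-2}^{(j,0)}$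 with $\gamma_j^{(j,0)}=\delta_j^{(j,0)}=\delta_{j+1}^{(j,0)}=0$. Shift $(0,k)$, $k\ge0$: $p_{2n+k}^{(0,k)}=P_{n,n+k}$, $p_{2n+k+1}^{(0,k)}=P_{n+1,n+k}$ ($n\ge-1$), and for $n\ge k$: $xp_n^{(0,k)}=p_{n+1}^{(0,k)}+\beta_n^{(0,k)}p_n^{(0,k)}+\gamma_n^{(0,k)}p_{n-1}^{(0,k)}+\delta_n^{(0,k)}p_{n-2}^{(0,k)}$ (coefficients of zero polynomials set to $0$). For $(j,0)=(0,k)=(0,0)$ these coincide with the step-line coefficients $\beta_n,\gamma_n,\delta_n$. The constants $c_n^{(j,0)}$ and $c_n^{(0,k)}$ ($n\ge0$) are defined by $P_{n+j+1,n}-P_{n+j,n+1}=c_n^{(j,0)}P_{n+j,n}$ and $P_{n+1,n+k}-P_{n,n+k+1}=c_n^{(0,k)}P_{n,n+k}$. *)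

(* Defs.v *)
From HB Require Import structures.
From mathcomp Require Import all_boot all_order all_algebra.
From mathcomp Require Import all_classical all_reals all_analysis.
Set Implicit Arguments. Unset Strict Implicit. Unset Printing Implicit Defensive.
Import Order.TTheory GRing.Theory Num.Theory.
Local Open Scope ring_scope.

Definition finite_moments (R : realType)
  (mu : {measure set (measurableTypeR R) -> \bar R}) : Prop :=
  forall k : nat, mu.-integrable setT (fun x : R => (x ^+ k)%:E).

Definition is_MOP (R : realType)
  (mu1 mu2 : {measure set (measurableTypeR R) -> \bar R})
  (n m : nat) (Q : {poly R}) : Prop :=
  [/\ Q \is monic, size Q = (n + m).+1,
      (forall k, (k < n)%N -> (\int[mu1]_x ((x ^+ k * Q.[x])%:E) = 0)%E) &
      (forall k, (k < m)%N -> (\int[mu2]_x ((x ^+ k * Q.[x])%:E) = 0)%E)].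

Definition normal_system (R : realType)
  (mu1 mu2 : {measure set (measurableTypeR R) -> \bar R}) : Prop :=
  forall n m : nat, exists! Q : {poly R}, is_MOP mu1 mu2 n m Q.

Definition Pdn (R : ringType) (P : nat -> nat -> {poly R}) (n m : nat) : {poly R} :=
  if (0 < n)%N then P n.-1 m else 0.
Definition Pdm (R : ringType) (P : nat -> nat -> {poly R}) (n m : nat) : {poly R} :=
  if (0 < m)%N then P n m.-1 else 0.

(* Shifted step-line (j,0): p_{2n+j} = P_{n+j,n}, p_{2n+j+1} = P_{n+j+1,n},
   and p_i = 0 for i < j. *)
Definition stepJ (R : ringType) (P : nat -> nat -> {poly R}) (j i : nat) : {poly R} :=
  if (i < j)%N then 0 else
  let t := (i - j)%N in
  if odd t then P (t./2 + j).+1 t./2 else P (t./2 + j)%N t./2.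

(* Shifted step-line (0,k): p_{2n+k} = P_{n,n+k}, p_{2n+k+1} = P_{n+1,n+k}
   (n >= -1, with P_{-1,.} = 0), and p_i = 0 below index k-2. *)
Definition stepK (R : ringType) (P : nat -> nat -> {poly R}) (k i : nat) : {poly R} :=
  if (i + 2 <= k)%N then 0 else
  let t := (i + 2 - k)%N in
  if odd t then P t./2 (t./2 + k).-1 else P t./2.-1 (t./2 + k).-1.

Definition back (R : ringType) (p : nat -> {poly R}) (i r : nat) : {poly R} :=
  if (r <= i)%N then p (i - r)%N else 0.

(* Main.v *)
Require Import Defs.
From HB Require Import structures.
From mathcomp Require Import all_boot all_order all_algebra.
From mathcomp Require Import all_classical all_reals all_analysis.
From mathcomp Require Import ring zify.
Import Order.TTheory GRing.Theory Num.Theory.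
Set Implicit Arguments. Unset Strict Implicit. Unset Printing Implicit Defensive.
Local Open Scope ring_scope.

Lemma poly_int (R : realType) (mu : {measure set (measurableTypeR R) -> \bar R})
  (fm : finite_moments mu) (p : {poly R}) :
  mu.-integrable setT (fun x : R => (p.[x])%:E).
Proof.
have := (@eq_integrable _ _ _ mu _ measurableT (fun x : R => (\sum_(i < size p) (p`_i)%:E * (x ^+ i)%:E)%E) (fun x : R => (p.[x])%:E)).
apply.
  by move=> x _; rewrite horner_coef /= -sumEFin; apply: eq_bigr => i _; rewrite EFinM.
apply: (integrable_sum measurableT) => i _; apply: (integrableZl measurableT); exact: fm.
Qed.

Lemma int_add (R : realType) (mu : {measure set (measurableTypeR R) -> \bar R})
  (fm : finite_moments mu) (p q : {poly R}) k :
  (\int[mu]_x ((x ^+ k * (p + q).[x])%:E) =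
   \int[mu]_x ((x ^+ k * p.[x])%:E) + \int[mu]_x ((x ^+ k * q.[x])%:E))%E.
Proof.
have h r : mu.-integrable setT (fun x : R => (x ^+ k * r.[x])%:E).
  have := (@eq_integrable _ _ _ mu _ measurableT (fun x : R => (('X^k * r).[x])%:E) (fun x : R => (x ^+ k * r.[x])%:E)).
  apply; last exact: poly_int.
  by move=> x _; rewrite hornerM hornerXn.
rewrite -(integralD measurableT (h p) (h q)); apply: eq_integral => x _.
by rewrite hornerD mulrDr EFinD.
Qed.

Lemma comb (R : ringType) (t x y z : {poly R}) k1 k2 k3 :
  x = 0 -> y = 0 -> z = 0 -> t = k1 *: x + k2 *: y + k3 *: z -> t = 0.
Proof. by move=> -> -> -> ->; rewrite !scaler0 !addr0. Qed.

Lemma toz (R : ringType) (x y : {poly R}) : x = y -> x - y = 0.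
Proof. by move=> ->; rewrite subrr. Qed.

Lemma ext_sz (R : ringType) s (al : R) (p r : {poly R}) :
  p`_s = 1 -> (size r <= s)%N -> (size (al *: p + r)%R <= s)%N -> al = 0.
Proof.
move=> hp hr hs.
have h : (al *: p + r)`_s = 0 by rewrite nth_default.
by move: h; rewrite coefD coefZ hp mulr1 (nth_default _ hr) addr0.
Qed.

Lemma ext0 (R : ringType) s (al : R) (p r : {poly R}) :
  p`_s = 1 -> (size r <= s)%N -> al *: p + r = 0 -> al = 0 /\ r = 0.
Proof.
move=> hp hr h.
have a0 : al = 0.
  apply: (ext_sz hp hr). by rewrite h size_poly0.
by split=> //; move: h; rewrite a0 scale0r add0r.
Qed.

Lemma sz_add (R : ringType) (p q : {poly R}) s :
  (size p <= s)%N -> (size q <= s)%N -> (size (p + q)%R <= s)%N.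
Proof. by move=> hp hq; apply: leq_trans (size_add _ _) _; rewrite geq_max hp hq. Qed.

Lemma sz_scale (R : ringType) (p : {poly R}) al s :
  (size p <= s)%N -> (size (al *: p) <= s)%N.
Proof. by move=> h; apply: leq_trans (size_scale_leq _ _) h. Qed.

Lemma ext_last (R : ringType) s (al : R) (p : {poly R}) :
  p`_s = 1 -> al *: p = 0 -> al = 0.
Proof. by move=> hp h; apply: (ext_sz (r := 0) hp); rewrite ?size_poly0 // addr0 h size_poly0. Qed.

Lemma zcomb (R : comRingType) (x y z1 z2 : R) k1 k2 :
  z1 = 0 -> z2 = 0 -> x - y = k1 * z1 + k2 * z2 -> x = y.
Proof. by move=> -> -> h; apply/eqP; rewrite -subr_eq0 h !mulr0 addr0. Qed.

Ltac szt szP := repeat first [apply: sz_add | apply: sz_scale | (apply: (szP _ _ _); lia)].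

Lemma compat (R : fieldType) (P : nat -> nat -> {poly R}) (a b c d : nat -> nat -> R) :
  (forall n m, size (P n m) = (n+m).+1) ->
  (forall n m, (P n m)`_(n+m) = 1) ->
  (forall n m, d n m - c n m != 0) ->
  (forall n m, 'X * P n m =
     P n.+1 m + c n m *: P n m + a n m *: Pdn P n m + b n m *: Pdm P n m) ->
  (forall n m, 'X * P n m =
     P n m.+1 + d n m *: P n m + a n m *: Pdn P n m + b n m *: Pdm P n m) ->
  forall N M, a N.+1 M.+1 * (d N M - c N M) = (d N.+1 M - c N.+1 M) * a N.+1 M.
Proof.
move=> hsz hlc hD NN1 NN2.
have szP n m s : (n + m < s)%N -> (size (P n m) <= s)%N by rewrite hsz.
have Sup n m : P n.+1 m = P n m.+1 + (d n m - c n m) *: P n m.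
  apply/eqP; rewrite -subr_eq0; apply/eqP.
  apply: (@comb _ _ _ _ _ (-1) 1 0 (toz (NN1 n m)) (toz (NN2 n m)) (toz (NN2 n m))).
  by rewrite -!mul_polyC; ring.
have Sdn n m : P n m.+1 = P n.+1 m - (d n m - c n m) *: P n m.
  by rewrite Sup addrK.
move=> N M.
have e1 := NN1 N.+1 M.+1; have e2 := NN2 N.+2 M; have e3 := NN1 N.+1 M.
rewrite /Pdn /Pdm /= in e1 e2 e3.
rewrite (Sup N.+1 M) in e2 e3. rewrite (Sdn N M) in e1.
case: M e1 e2 e3 => [|M] e1 e2 e3 /=.
- rewrite /= scaler0 addr0 in e2. rewrite /= scaler0 addr0 in e3.
  set D3 := d N.+1 0%N - c N.+1 0%N. set Dnm := d N 0%N - c N 0%N.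
  have E : (c N.+1 1%N + D3 - d N.+2 0%N) *: P N.+1 1%N +
    ((a N.+1 1%N + b N.+1 1%N + D3 * (D3 + c N.+1 0%N) - d N.+2 0%N * D3 - a N.+2 0%N) *: P N.+1 0%N
     + (- a N.+1 1%N * Dnm + D3 * a N.+1 0%N) *: P N 0%N) = 0.
    apply: (@comb _ _ _ _ _ (-1) (- D3) 1 (toz e1) (toz e3) (toz e2)).
    by rewrite /D3 /Dnm -!mul_polyC; ring.
  have [] := ext0 (hlc _ _) _ E; [by szt szP|move=> _ {}E].
  have [] := ext0 (hlc _ _) _ E; [by szt szP|move=> _ {}E].
  have {}E := ext_last (hlc _ _) E.
  by apply: (zcomb (k1 := -1) (k2 := 0) E E); ring.
rewrite (Sup N.+1 M) in e2. rewrite (Sup N M) in e2 e3.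
set D3 := d N.+1 M.+1 - c N.+1 M.+1. set Dnm := d N M.+1 - c N M.+1.
set Dq := d N.+1 M - c N.+1 M. set Dr := d N M - c N M.
have E : (c N.+1 M.+2 + D3 - d N.+2 M.+1) *: P N.+1 M.+2 +
  ((a N.+1 M.+2 + b N.+1 M.+2 + D3 * (D3 + c N.+1 M.+1) - d N.+2 M.+1 * D3 - a N.+2 M.+1 - b N.+2 M.+1) *: P N.+1 M.+1
   + ((- a N.+1 M.+2 * Dnm + D3 * (a N.+1 M.+1 + b N.+1 M.+1) - b N.+2 M.+1 * Dq) *: P N M.+1
   + ((D3 * b N.+1 M.+1 - b N.+2 M.+1 * Dq) * Dr) *: P N M)) = 0.
  apply: (@comb _ _ _ _ _ (-1) (- D3) 1 (toz e1) (toz e3) (toz e2)).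
  by rewrite /D3 /Dnm /Dq /Dr -!mul_polyC; ring.
have [] := ext0 (hlc _ _) _ E; [by szt szP|move=> _ {}E].
have [] := ext0 (hlc _ _) _ E; [by szt szP|move=> _ {}E].
have [] := ext0 (hlc _ _) _ E; [by szt szP|move=> E1 E2].
have {}E2 := ext_last (hlc _ _) E2.
have : (D3 * b N.+1 M.+1 - b N.+2 M.+1 * Dq) = 0.
  by move/eqP: E2; rewrite mulf_eq0 (negbTE (hD _ _)) orbF => /eqP.
move=> E3.
by apply: (zcomb (k1 := -1) (k2 := 1) E1 E3); rewrite /D3 /Dnm /Dq; ring.
Qed.

Lemma sJe (R : ringType) (P : nat -> nat -> {poly R}) j n i :
  i = (n.*2 + j)%N -> stepJ P j i = P (n + j)%N n.
Proof.
move=> ->; rewrite /stepJ ltnNge leq_addl /= addnK odd_double /=.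
by rewrite doubleK.
Qed.

Lemma sJo (R : ringType) (P : nat -> nat -> {poly R}) j n i :
  i = (n.*2 + j).+1%N -> stepJ P j i = P (n + j).+1 n.
Proof.
move=> ->; rewrite /stepJ ltnNge (leq_trans (leq_addl _ _) (leqnSn _)) /=.
by rewrite -addSn addnK /= odd_double /= uphalf_double.
Qed.

Lemma sKe (R : ringType) (P : nat -> nat -> {poly R}) k n i :
  i = (n.*2 + k)%N -> stepK P k i = P n (n + k)%N.
Proof.
move=> ->; rewrite /stepK.
have -> : (n.*2 + k + 2 <= k)%N = false by rewrite -addnn; lia.
have -> : (n.*2 + k + 2 - k)%N = (n.+1).*2 by rewrite -!addnn; lia.
by rewrite odd_double doubleK /=.
Qed.

Lemma sKo (R : ringType) (P : nat -> nat -> {poly R}) k n i :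
  i = (n.*2 + k).+1%N -> stepK P k i = P n.+1 (n + k)%N.
Proof.
move=> ->; rewrite /stepK.
have -> : ((n.*2 + k).+1 + 2 <= k)%N = false by rewrite -addnn; lia.
have -> : ((n.*2 + k).+1 + 2 - k)%N = (n.+1).*2.+1 by rewrite -!addnn; lia.
by rewrite /= odd_double /= uphalf_double.
Qed.

Lemma backS (R : ringType) (p : nat -> {poly R}) i : back p i.+1 1 = p i.
Proof. by rewrite /back /= subn1. Qed.
Lemma backSS (R : ringType) (p : nat -> {poly R}) i : back p i.+2 2 = p i.
Proof. by rewrite /back /= subn2. Qed.

Lemma szJ (R : ringType) (P : nat -> nat -> {poly R}) :
  (forall n m, size (P n m) = (n+m).+1) -> forall j i, (size (stepJ P j i) <= i.+1)%N.
Proof.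
move=> hsz j i; rewrite /stepJ; case: ltnP => h; first by rewrite size_poly0.
have := odd_double_half (i - j); rewrite -addnn.
by case: ifP => _; rewrite hsz => /= e; lia.
Qed.

Lemma szK (R : ringType) (P : nat -> nat -> {poly R}) :
  (forall n m, size (P n m) = (n+m).+1) -> forall k i, (size (stepK P k i) <= i.+1)%N.
Proof.
move=> hsz k i; rewrite /stepK; case: (leqP (i + 2) k) => h; first by rewrite size_poly0.
have := odd_double_half (i + 2 - k); rewrite -addnn.
by case: ifP => _; rewrite hsz => /= e; lia.
Qed.

Lemma szback (R : ringType) (p : nat -> {poly R}) i r :
  (forall i, (size (p i) <= i.+1)%N) -> (1 <= r)%N -> (size (back p i r) <= i)%N.
Proof.
move=> h hr; rewrite /back; case: ifP => hi; last by rewrite size_poly0.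
by apply: leq_trans (h _) _; lia.
Qed.

Lemma szPdn (R : ringType) (P : nat -> nat -> {poly R}) :
  (forall n m, size (P n m) = (n+m).+1) -> forall n m, (size (Pdn P n m) <= n + m)%N.
Proof. by move=> hsz [|n] m; rewrite /Pdn /= ?size_poly0 // hsz; lia. Qed.
Lemma szPdm (R : ringType) (P : nat -> nat -> {poly R}) :
  (forall n m, size (P n m) = (n+m).+1) -> forall n m, (size (Pdm P n m) <= n + m)%N.
Proof. by move=> hsz n [|m]; rewrite /Pdm /= ?size_poly0 // hsz; lia. Qed.

Lemma alg_main (R : fieldType) (P : nat -> nat -> {poly R})
  (a b c d : nat -> nat -> R)
  (betaJ gammaJ deltaJ : nat -> nat -> R)
  (betaK gammaK deltaK : nat -> nat -> R)
  (cJ cK : nat -> nat -> R) :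
  (forall n m, size (P n m) = (n+m).+1) ->
  (forall n m, (P n m)`_(n+m) = 1) ->
  (forall n m, d n m - c n m != 0) ->
  (forall n m, 'X * P n m =
     P n.+1 m + c n m *: P n m + a n m *: Pdn P n m + b n m *: Pdm P n m) ->
  (forall n m, 'X * P n m =
     P n m.+1 + d n m *: P n m + a n m *: Pdn P n m + b n m *: Pdm P n m) ->
  (forall j i, ((j < i) || (j == 0))%N -> 'X * stepJ P j i =
     stepJ P j i.+1 + betaJ j i *: stepJ P j i
     + gammaJ j i *: back (stepJ P j) i 1 + deltaJ j i *: back (stepJ P j) i 2) ->
  (forall j, (1 <= j)%N ->
     (size ('X * stepJ P j j - stepJ P j j.+1 - betaJ j j *: stepJ P j j)%R <= j)%N) ->
  (forall k i, (k <= i)%N -> 'X * stepK P k i =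
     stepK P k i.+1 + betaK k i *: stepK P k i
     + gammaK k i *: back (stepK P k) i 1 + deltaK k i *: back (stepK P k) i 2) ->
  (forall j n, P (n + j).+1 n - P (n + j)%N n.+1 = cJ j n *: P (n + j)%N n) ->
  (forall k n, P n.+1 (n + k)%N - P n (n + k).+1 = cK k n *: P n (n + k)%N) ->
  (forall n j, (1 <= j)%N ->
     [/\ c (n + j)%N n = betaJ j (2 * n + j)%N,
         d (n + j)%N n = c (n + j)%N n + cJ j n,
         a (n + j)%N n = - deltaJ j.-1 (2 * n + j).+1 / cJ j n &
         ((1 <= n)%N -> b (n + j)%N n = gammaJ j (2 * n + j)%N - a (n + j)%N n)]) /\
  (forall n k, (1 <= n)%N ->
     [/\ c n (n + k)%N = betaK k (2 * n + k)%N,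
         d n (n + k)%N = c n (n + k)%N + cK k n,
         a n (n + k)%N = - deltaK k (2 * n + k)%N / cK k n.-1 &
         b n (n + k)%N = gammaK k (2 * n + k)%N - a n (n + k)%N]) /\
  c 0%N 0%N = betaJ 0%N 0%N.
Proof.
move=> hsz hlc hD NN1 NN2 hJrec hJsz hKrec hcJ hcK.
have szP n m s : (n + m < s)%N -> (size (P n m) <= s)%N by rewrite hsz.
have Sup n m : P n.+1 m = P n m.+1 + (d n m - c n m) *: P n m.
  apply/eqP; rewrite -subr_eq0; apply/eqP.
  apply: (@comb _ _ _ _ _ (-1) 1 0 (toz (NN1 n m)) (toz (NN2 n m)) (toz (NN2 n m))).
  by rewrite -!mul_polyC; ring.
have Sdn n m : P n m.+1 = P n.+1 m - (d n m - c n m) *: P n m.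
  by rewrite Sup addrK.
have DJ j n : cJ j n = d (n + j)%N n - c (n + j)%N n.
  apply/eqP; rewrite -subr_eq0; apply/eqP; apply: (ext_last (hlc (n + j)%N n)).
  rewrite scalerBl -hcJ (Sup (n + j)%N n).
  by rewrite -!mul_polyC; ring.
have DK k n : cK k n = d n (n + k)%N - c n (n + k)%N.
  apply/eqP; rewrite -subr_eq0; apply/eqP; apply: (ext_last (hlc n (n + k)%N)).
  rewrite scalerBl -hcK (Sup n (n + k)%N).
  by rewrite -!mul_polyC; ring.
have hcmp := compat hsz hlc hD NN1 NN2.
split.
  move=> n j hj; case: j hj => [//|j] _.
  rewrite mul2n !addnS /=.
  have hb : (1 <= n)%N -> b (n + j).+1 n = gammaJ j.+1 (n.*2 + j).+1 - a (n + j).+1 n.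
    move=> hn; case: n hn => [//|m] _.
    rewrite doubleS !addSn.
    have hi : ((j.+1 < (m.*2 + j).+3) || (j.+1 == 0))%N by rewrite -!addnn; lia.
    have e := hJrec j.+1 (m.*2 + j).+3 hi.
    rewrite backS backSS in e.
    rewrite (sJe P (j:=j.+1) (n:=m.+1) (i:=(m.*2+j).+3)) in e; last by rewrite -!addnn; lia.
    rewrite (sJo P (j:=j.+1) (n:=m.+1) (i:=(m.*2+j).+4)) in e; last by rewrite -!addnn; lia.
    rewrite (sJo P (j:=j.+1) (n:=m) (i:=(m.*2+j).+2)) in e; last by rewrite -!addnn; lia.
    rewrite (sJe P (j:=j.+1) (n:=m) (i:=(m.*2+j).+1)) in e; last by rewrite -!addnn; lia.
    rewrite ?addSn ?addnS in e.
    have e1 := NN1 (m+j).+2 m.+1; rewrite /Pdn /Pdm /= in e1.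
    rewrite (Sdn (m+j).+1 m) in e1.
    have E : (c (m+j).+2 m.+1 - betaJ j.+1 (m.*2+j).+3) *: P (m+j).+2 m.+1 +
      ((a (m+j).+2 m.+1 + b (m+j).+2 m.+1 - gammaJ j.+1 (m.*2+j).+3) *: P (m+j).+2 m +
       (- a (m+j).+2 m.+1 * (d (m+j).+1 m - c (m+j).+1 m) - deltaJ j.+1 (m.*2+j).+3) *: P (m+j).+1 m) = 0.
      apply: (@comb _ _ _ _ _ (-1) 1 0 (toz e1) (toz e) (toz e)).
      by rewrite -!mul_polyC; ring.
    have [] := ext0 (hlc _ _) _ E; [by szt szP | move=> E1 {}E].
    have [] := ext0 (hlc _ _) _ E; [by szt szP | move=> E2 E3].
    by apply: (zcomb (k1:=1) (k2:=0) E2 E2); ring.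
  have S : (size ('X * P (n+j).+1 n - P (n+j).+2 n - betaJ j.+1 (n.*2+j).+1 *: P (n+j).+1 n)%R
             <= (n.*2+j).+1)%N.
    case: n {hb} => [|m].
    - have := hJsz j.+1 erefl.
      rewrite (sJe P (n:=0) (i:=j.+1)) // (sJo P (n:=0) (i:=j.+2)) //.
    - have hi : ((j.+1 < ((m.+1).*2 + j).+1) || (j.+1 == 0))%N by rewrite -!addnn; lia.
      have e := hJrec j.+1 ((m.+1).*2 + j).+1 hi.
      rewrite (sJe P (j:=j.+1) (n:=m.+1) (i:=((m.+1).*2+j).+1)) in e; last by rewrite -!addnn; lia.
      rewrite (sJo P (j:=j.+1) (n:=m.+1) (i:=((m.+1).*2+j).+2)) in e; last by rewrite -!addnn; lia.
      rewrite ?addnS in e.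
      rewrite e.
      set u := back _ _ 1; set v := back _ _ 2.
      have -> : P (m.+1 + j).+2 m.+1 + betaJ j.+1 ((m.+1).*2 + j).+1 *: P (m.+1 + j).+1 m.+1 +
        gammaJ j.+1 ((m.+1).*2 + j).+1 *: u + deltaJ j.+1 ((m.+1).*2 + j).+1 *: v -
        P (m.+1 + j).+2 m.+1 - betaJ j.+1 ((m.+1).*2 + j).+1 *: P (m.+1 + j).+1 m.+1 =
        gammaJ j.+1 ((m.+1).*2 + j).+1 *: u + deltaJ j.+1 ((m.+1).*2 + j).+1 *: v.
        by rewrite -!mul_polyC; ring.
      by apply: sz_add; apply: sz_scale; apply: szback => //; exact: szJ.
  have hc : c (n+j).+1 n = betaJ j.+1 (n.*2+j).+1.
    apply/eqP; rewrite -subr_eq0; apply/eqP.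
    apply: (ext_sz (hlc (n+j).+1 n) (r := a (n+j).+1 n *: Pdn P (n+j).+1 n + b (n+j).+1 n *: Pdm P (n+j).+1 n)).
      by apply: sz_add; apply: sz_scale; [exact: szPdn | exact: szPdm].
    have Eq : 'X * P (n+j).+1 n - P (n+j).+2 n - betaJ j.+1 (n.*2+j).+1 *: P (n+j).+1 n =
      (c (n + j).+1 n - betaJ j.+1 (n.*2 + j).+1) *: P (n + j).+1 n +
            (a (n + j).+1 n *: Pdn P (n + j).+1 n + b (n + j).+1 n *: Pdm P (n + j).+1 n).
      by rewrite NN1 -!mul_polyC; ring.
    rewrite -Eq.
    by apply: leq_trans S _; rewrite -!addnn; lia.
  have ha : a (n + j).+1 n = - deltaJ j (n.*2 + j).+2 / cJ j.+1 n.
    have hi : ((j < (n.*2 + j).+2) || (j == 0))%N by rewrite -!addnn; lia.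
    have e := hJrec j (n.*2 + j).+2 hi.
    rewrite backS backSS in e.
    rewrite (sJe P (j:=j) (n:=n.+1) (i:=(n.*2+j).+2)) in e; last by rewrite -!addnn; lia.
    rewrite (sJo P (j:=j) (n:=n.+1) (i:=(n.*2+j).+3)) in e; last by rewrite -!addnn; lia.
    rewrite (sJo P (j:=j) (n:=n) (i:=(n.*2+j).+1)) in e; last by rewrite -!addnn; lia.
    rewrite (sJe P (j:=j) (n:=n) (i:=(n.*2+j))) in e; last by rewrite -!addnn; lia.
    rewrite ?addSn in e.
    have e1 := NN1 (n+j).+1 n.+1; rewrite /Pdn /Pdm /= in e1.
    rewrite (Sdn (n+j) n) in e1.
    have E : (c (n+j).+1 n.+1 - betaJ j (n.*2+j).+2) *: P (n+j).+1 n.+1 +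
      ((a (n+j).+1 n.+1 + b (n+j).+1 n.+1 - gammaJ j (n.*2+j).+2) *: P (n+j).+1 n +
       (- a (n+j).+1 n.+1 * (d (n+j) n - c (n+j) n) - deltaJ j (n.*2+j).+2) *: P (n+j) n) = 0.
      apply: (@comb _ _ _ _ _ (-1) 1 0 (toz e1) (toz e) (toz e)).
      by rewrite -!mul_polyC; ring.
    have [] := ext0 (hlc _ _) _ E; [by szt szP | move=> E1 {}E].
    have [] := ext0 (hlc _ _) _ E; [by szt szP | move=> E2 E3].
    have {}E3 := ext_last (hlc _ _) E3.
    have hd : deltaJ j (n.*2+j).+2 = - (a (n+j).+1 n.+1 * (d (n+j) n - c (n+j) n)).
      by apply: (zcomb (k1:=-1) (k2:=0) E3 E3); ring.
    rewrite (DJ j.+1 n) addnS hd opprK hcmp; field; exact: hD.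
  split => //.
  by rewrite (DJ j.+1 n) addnS; ring.
split.
  move=> n k; case: n => [//|m] _.
  rewrite mul2n doubleS !addSn /=.
  have hk : (k <= (m.*2 + k).+2)%N by rewrite -addnn; lia.
  have e := hKrec k (m.*2 + k).+2 hk.
  rewrite backS backSS in e.
  rewrite (sKe P (n:=m.+1) (i:=(m.*2+k).+2)) ?doubleS ?addSn // in e.
  rewrite (sKo P (n:=m.+1) (i:=(m.*2+k).+3)) ?doubleS ?addSn // in e.
  rewrite (sKo P (n:=m) (i:=(m.*2+k).+1)) // (sKe P (n:=m) (i:=(m.*2+k))) // in e.
  rewrite ?addSn in e.
  have e1 := NN1 m.+1 (m+k).+1; rewrite /Pdn /Pdm /= in e1.
  rewrite (Sdn m (m+k)%N) in e1.
  have E : (c m.+1 (m+k).+1 - betaK k (m.*2+k).+2) *: P m.+1 (m+k).+1 +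
    ((a m.+1 (m+k).+1 + b m.+1 (m+k).+1 - gammaK k (m.*2+k).+2) *: P m.+1 (m+k)%N +
     (- a m.+1 (m+k).+1 * (d m (m+k)%N - c m (m+k)%N) - deltaK k (m.*2+k).+2) *: P m (m+k)%N) = 0.
    apply: (@comb _ _ _ _ _ (-1) 1 0 (toz e1) (toz e) (toz e)).
    by rewrite -!mul_polyC; ring.
  have [] := ext0 (hlc _ _) _ E; [by szt szP | move=> E1 {}E].
  have [] := ext0 (hlc _ _) _ E; [by szt szP | move=> E2 E3].
  have {}E3 := ext_last (hlc _ _) E3.
  have hd : deltaK k (m.*2+k).+2 = - a m.+1 (m+k).+1 * (d m (m+k)%N - c m (m+k)%N).
    by apply: (zcomb (k1:=-1) (k2:=0) E3 E3); ring.
  split.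
  - by apply/eqP; rewrite -subr_eq0; apply/eqP.
  - by rewrite DK addSn; ring.
  - rewrite DK hd; field; exact: hD.
  - by apply: (zcomb (k1:=1) (k2:=0) E2 E2); ring.
have e := hJrec 0%N 0%N erefl.
rewrite /back /= (sJe P (n:=0) (j:=0) (i:=0) erefl) (sJo P (n:=0) (j:=0) (i:=1) erefl) in e.
rewrite !add0n in e.
have e1 := NN1 0%N 0%N; rewrite /Pdn /Pdm /= in e1.
apply/eqP; rewrite -subr_eq0; apply/eqP; apply: (ext_last (hlc 0%N 0%N)).
apply: (@comb _ _ _ _ _ (-1) 1 0 (toz e1) (toz e) (toz e)).
by rewrite -!mul_polyC; ring.
Qed.

Theorem theorem2p3 (R : realType)
  (mu1 mu2 : {measure set (measurableTypeR R) -> \bar R})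
  (P : nat -> nat -> {poly R})
  (a b c d : nat -> nat -> R)
  (betaJ gammaJ deltaJ : nat -> nat -> R)
  (betaK gammaK deltaK : nat -> nat -> R)
  (cJ cK : nat -> nat -> R) :
  finite_moments mu1 -> finite_moments mu2 ->
  normal_system mu1 mu2 ->
  (forall n m, is_MOP mu1 mu2 n m (P n m)) ->
  (* nearest neighbor recurrence relations *)
  (forall n m, 'X * P n m =
     P n.+1 m + c n m *: P n m + a n m *: Pdn P n m + b n m *: Pdm P n m) ->
  (forall n m, 'X * P n m =
     P n m.+1 + d n m *: P n m + a n m *: Pdn P n m + b n m *: Pdm P n m) ->
  (* shifted step-line (j,0) recurrences, j >= 0, for i >= j
     (exact for i > j, and for j = 0) *)
  (forall j i, ((j < i) || (j == 0))%N -> 'X * stepJ P j i =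
     stepJ P j i.+1 + betaJ j i *: stepJ P j i
     + gammaJ j i *: back (stepJ P j) i 1 + deltaJ j i *: back (stepJ P j) i 2) ->
  (* at i = j >= 1 the lower neighbours are the zero polynomial; beta_j^{(j,0)}
     is the coefficient of p_j, the relation holding up to degree < j *)
  (forall j, (1 <= j)%N ->
     (size ('X * stepJ P j j - stepJ P j j.+1 - betaJ j j *: stepJ P j j)%R <= j)%N) ->
  (forall j, gammaJ j j = 0 /\ deltaJ j j = 0 /\ deltaJ j j.+1 = 0) ->
  (* shifted step-line (0,k) recurrences, k >= 0, for i >= k *)
  (forall k i, (k <= i)%N -> 'X * stepK P k i =
     stepK P k i.+1 + betaK k i *: stepK P k i
     + gammaK k i *: back (stepK P k) i 1 + deltaK k i *: back (stepK P k) i 2) ->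
  (forall k, deltaK k k = 0) -> gammaK 0%N 0%N = 0 -> deltaK 0%N 1%N = 0 ->
  (* the step-line (0,0) coefficients: both shift families agree there *)
  (forall i, betaJ 0%N i = betaK 0%N i /\ gammaJ 0%N i = gammaK 0%N i
             /\ deltaJ 0%N i = deltaK 0%N i) ->
  (* the constants c_n^{(j,0)} and c_n^{(0,k)} *)
  (forall j n, P (n + j).+1 n - P (n + j)%N n.+1 = cJ j n *: P (n + j)%N n) ->
  (forall k n, P n.+1 (n + k)%N - P n (n + k).+1 = cK k n *: P n (n + k)%N) ->
  (* shift (j,0), j >= 1 *)
  (forall n j, (1 <= j)%N ->
     [/\ c (n + j)%N n = betaJ j (2 * n + j)%N,
         d (n + j)%N n = c (n + j)%N n + cJ j n,
         a (n + j)%N n = - deltaJ j.-1 (2 * n + j).+1 / cJ j n &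
         ((1 <= n)%N -> b (n + j)%N n = gammaJ j (2 * n + j)%N - a (n + j)%N n)]) /\
  (* shift (0,k), k >= 0, n >= 1 *)
  (forall n k, (1 <= n)%N ->
     [/\ c n (n + k)%N = betaK k (2 * n + k)%N,
         d n (n + k)%N = c n (n + k)%N + cK k n,
         a n (n + k)%N = - deltaK k (2 * n + k)%N / cK k n.-1 &
         b n (n + k)%N = gammaK k (2 * n + k)%N - a n (n + k)%N]) /\
  (* initial coefficient *)
  c 0%N 0%N = betaJ 0%N 0%N.

Proof.
move=> fm1 fm2 hns hP NN1 NN2 hJrec hJsz _ hKrec _ _ _ _ hcJ hcK.
have hsz n m : size (P n m) = (n+m).+1 by case: (hP n m).
have hlc n m : (P n m)`_(n+m) = 1.
  by case: (hP n m) => /monicP hm _ _ _; rewrite -hm /lead_coef hsz.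
have Sup n m : P n.+1 m = P n m.+1 + (d n m - c n m) *: P n m.
  apply/eqP; rewrite -subr_eq0; apply/eqP.
  apply: (@comb _ _ _ _ _ (-1) 1 0 (toz (NN1 n m)) (toz (NN2 n m)) (toz (NN2 n m))).
  by rewrite -!mul_polyC; ring.
have hD n m : d n m - c n m != 0.
  apply/eqP => h0.
  have hQ : P n.+1 m = P n m.+1 by rewrite Sup h0 scale0r addr0.
  have hlt : (size (P n.+1 m) < size (P n.+1 m.+1))%N by rewrite !hsz addnS.
  have hT : is_MOP mu1 mu2 n.+1 m.+1 (P n.+1 m.+1 + P n.+1 m).
    case: (hP n.+1 m.+1) => hm hs h1 h2.
    split.
    - by apply/monicP; rewrite lead_coefDl // (monicP hm).
    - by rewrite size_polyDl.
    - move=> k hk; rewrite (int_add fm1) h1 //.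
      by case: (hP n.+1 m) => _ _ -> //; rewrite adde0.
    - move=> k hk; rewrite (int_add fm2) h2 // hQ.
      by case: (hP n m.+1) => _ _ _ -> //; rewrite adde0.
  have [Q0 [_ hu]] := hns n.+1 m.+1.
  have e1 := hu _ (hP n.+1 m.+1); have e2 := hu _ hT.
  have : P n.+1 m = 0.
    apply: (@addrI _ (P n.+1 m.+1)); by rewrite addr0 -e2.
  by move=> hz; have := hsz n.+1 m; rewrite hz size_poly0.
exact: (alg_main hsz hlc hD NN1 NN2 hJrec hJsz hKrec hcJ hcK).
Qed.
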